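(* Let $P$ be a continuous $L$-ordered set. Then $\Sigma_LP=(P,\sigma_L(P))$ is a locally super-compact $L$-topological space. Consequently, if $P$ is moreover an $L$-dcpo, then $\Sigma_LP$ is a locally super-compact $L$-sober space.
   Context: $L$ is a frame with implication $\to$. $L$-subsets of $X$: maps $X\to L$; nonempty: $\bigvee_xA(x)=1$; ${\rm sub}_X(A,B)=\bigwedge_xA(x)\to B(x)$. $L$-topology: $\mathcal O(X)\subseteq L^X$ closed under finite meets, arbitrary joins, containing constants; interior $A^\circ=\bigvee\{B\text{ open}:B\le A\}$. Super-compact: nonempty $A$ with ${\rm sub}_X(A,\bigvee_iV_i)=\bigvee_i{\rm sub}_X(A,V_i)$ for every family of open $V_i$; ${\rm SC}(X)$ is their set. Locally super-compact: every open $A$ equals $\bigvee_{B\in{\rm SC}(X)}{\rm sub}_X(B,A)\wedge B^\circ$. A point of $\mathcal O(X)$: $p:\mathcal O(X)\to L$ preserving binary meets and arbitrary joins with $p(\lambda_X)=\lambda$; $[x](A)=A(x)$; $L$-sober: $x\mapsto[x]$ bijective onto the points. $L$-order on $P$: $e$ with $e(x,x)=1$, $e(x,y)\wedge e(y,z)\le e(x,z)$, $e(x,y)\wedge e(y,x)=1\Rightarrow x=y$. ${\downarrow}y(x)=e(x,y)$. $\sqcup A=x$ iff $e(x,y)={\rm sub}_P(A,{\downarrow}y)$ for all $y$. Directed: nonempty and $D(x)\wedge D(y)\le\bigvee_zD(z)\wedge e(x,z)\wedge e(y,z)$; ideal: directed lower set. $L$-dcpo: all directed $L$-subsets have suprema.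 ${\Downarrow}x(y)=\bigwedge\{e(x,\sqcup I)\to I(y):I\text{ ideal with a supremum}\}$; $P$ continuous if each ${\Downarrow}x$ is directed with supremum $x$. $\sigma_L(P)$: upper sets $A$ with $A(\sqcup D)=\bigvee_xA(x)\wedge D(x)$ for all directed $D$ having a supremum. *)

(* Defs.v *)
Set Implicit Arguments.
Unset Strict Implicit.

Record frame := Frame {
  fcar :> Type;
  fle : fcar -> fcar -> Prop;
  fle_refl : forall a, fle a a;
  fle_trans : forall a b c, fle a b -> fle b c -> fle a c;
  fle_antisym : forall a b, fle a b -> fle b a -> a = b;
  fsup : (fcar -> Prop) -> fcar;
  fsup_ub : forall (S : fcar -> Prop) a, S a -> fle a (fsup S);
  fsup_least : forall (S : fcar -> Prop) b, (forall a, S a -> fle a b) -> fle (fsup S) b;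
  finf : (fcar -> Prop) -> fcar;
  finf_lb : forall (S : fcar -> Prop) a, S a -> fle (finf S) a;
  finf_greatest : forall (S : fcar -> Prop) b, (forall a, S a -> fle b a) -> fle b (finf S);
  fmeet : fcar -> fcar -> fcar;
  fmeet_l : forall a b, fle (fmeet a b) a;
  fmeet_r : forall a b, fle (fmeet a b) b;
  fmeet_greatest : forall a b c, fle c a -> fle c b -> fle c (fmeet a b);
  fimp : fcar -> fcar -> fcar;
  fimp_adj : forall a b c, fle (fmeet a b) c <-> fle a (fimp b c)
}.

Arguments fle {L} : rename.
Arguments fsup {L} : rename.
Arguments finf {L} : rename.
Arguments fmeet {L} : rename.
Arguments fimp {L} : rename.

Section Defs.
Variable L : frame.

Definition ftop : L := finf (fun _ => False).

Definition isup (I : Type) (f : I -> L) : L := fsup (fun a => exists i, a = f i).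
Definition iinf (I : Type) (f : I -> L) : L := finf (fun a => exists i, a = f i).

Definition Lset (X : Type) := X -> L.

Definition Lnonempty (X : Type) (A : Lset X) : Prop := isup A = ftop.

Definition sub (X : Type) (A B : Lset X) : L := iinf (fun x => fimp (A x) (B x)).

Definition Lconst (X : Type) (l : L) : Lset X := fun _ => l.

Definition Lsubset (X : Type) (A B : Lset X) : Prop := forall x, fle (A x) (B x).

Definition Ljoin (X : Type) (F : Lset X -> Prop) : Lset X :=
  fun x => fsup (fun a => exists B, F B /\ a = B x).

Definition is_Ltopology (X : Type) (O : Lset X -> Prop) : Prop :=
  (forall A B, O A -> O B -> O (fun x => fmeet (A x) (B x))) /\
  (forall F : Lset X -> Prop, (forall B, F B -> O B) -> O (Ljoin F)) /\
  (forall l : L, O (@Lconst X l)).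

Definition interior (X : Type) (O : Lset X -> Prop) (A : Lset X) : Lset X :=
  Ljoin (fun B => O B /\ Lsubset B A).

Definition super_compact (X : Type) (O : Lset X -> Prop) (A : Lset X) : Prop :=
  Lnonempty A /\
  forall (I : Type) (V : I -> Lset X), (forall i, O (V i)) ->
    sub A (fun x => isup (fun i => V i x)) = isup (fun i => sub A (V i)).

Definition locally_super_compact (X : Type) (O : Lset X -> Prop) : Prop :=
  forall A, O A ->
    A = (fun x => fsup (fun a => exists B, super_compact O B /\
                                   a = fmeet (sub B A) (interior O B x))).

(** points of O(X): maps O(X) -> L, represented as maps on all L-subsets,
    of which only the values on open sets matter *)
Definition is_point (X : Type) (O : Lset X -> Prop) (p : Lset X -> L) : Prop :=
  (forall A B, O A -> O B -> p (fun x => fmeet (A x) (B x)) = fmeet (p A) (p B)) /\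
  (forall F : Lset X -> Prop, (forall B, F B -> O B) ->
      p (Ljoin F) = fsup (fun a => exists B, F B /\ a = p B)) /\
  (forall l : L, p (@Lconst X l) = l).

Definition pt_of (X : Type) (x : X) : Lset X -> L := fun A => A x.

Definition eq_on_opens (X : Type) (O : Lset X -> Prop) (p q : Lset X -> L) : Prop :=
  forall A, O A -> p A = q A.

Definition Lsober (X : Type) (O : Lset X -> Prop) : Prop :=
  (forall x y : X, eq_on_opens O (pt_of x) (pt_of y) -> x = y) /\
  (forall p, is_point O p -> exists x, eq_on_opens O p (pt_of x)).

Definition Lorder (P : Type) (e : P -> P -> L) : Prop :=
  (forall x, e x x = ftop) /\
  (forall x y z, fle (fmeet (e x y) (e y z)) (e x z)) /\
  (forall x y, fmeet (e x y) (e y x) = ftop -> x = y).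

Definition down (P : Type) (e : P -> P -> L) (y : P) : Lset P := fun x => e x y.

Definition is_Lsup (P : Type) (e : P -> P -> L) (A : Lset P) (x : P) : Prop :=
  forall y, e x y = sub A (down e y).

Definition directed (P : Type) (e : P -> P -> L) (D : Lset P) : Prop :=
  Lnonempty D /\
  forall x y, fle (fmeet (D x) (D y))
                  (isup (fun z => fmeet (D z) (fmeet (e x z) (e y z)))).

Definition lower_set (P : Type) (e : P -> P -> L) (A : Lset P) : Prop :=
  forall x y, fle (fmeet (A y) (e x y)) (A x).

Definition upper_set (P : Type) (e : P -> P -> L) (A : Lset P) : Prop :=
  forall x y, fle (fmeet (A x) (e x y)) (A y).

Definition ideal (P : Type) (e : P -> P -> L) (I : Lset P) : Prop :=
  directed e I /\ lower_set e I.

Definition Ldcpo (P : Type) (e : P -> P -> L) : Prop :=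
  forall D, directed e D -> exists s, is_Lsup e D s.

Definition waybelow (P : Type) (e : P -> P -> L) (x : P) : Lset P :=
  fun y => finf (fun a => exists I s, ideal e I /\ is_Lsup e I s /\
                                       a = fimp (e x s) (I y)).

Definition Lcontinuous (P : Type) (e : P -> P -> L) : Prop :=
  forall x, directed e (waybelow e x) /\ is_Lsup e (waybelow e x) x.

Definition sigmaL (P : Type) (e : P -> P -> L) (A : Lset P) : Prop :=
  upper_set e A /\
  forall D s, directed e D -> is_Lsup e D s ->
    A s = isup (fun x => fmeet (A x) (D x)).

End Defs.

(* Main.v *)
Require Import Defs.
From Stdlib Require Import FunctionalExtensionality Setoid.

Section FrameLemmas.
Context {L : frame}.
Local Notation "a ⊑ b" := (@fle L a b) (at level 70).
Local Notation "a ⊓ b" := (@fmeet L a b) (at level 40, left associativity).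
Local Notation top := (ftop L).

Lemma lr (a : L) : a ⊑ a. Proof. apply fle_refl. Qed.
Lemma lt (a b c : L) : a ⊑ b -> b ⊑ c -> a ⊑ c. Proof. apply fle_trans. Qed.
Lemma las (a b : L) : a ⊑ b -> b ⊑ a -> a = b. Proof. apply fle_antisym. Qed.
Lemma ml (a b : L) : a ⊓ b ⊑ a. Proof. apply fmeet_l. Qed.
Lemma mr (a b : L) : a ⊓ b ⊑ b. Proof. apply fmeet_r. Qed.
Lemma mg (a b c : L) : c ⊑ a -> c ⊑ b -> c ⊑ a ⊓ b. Proof. apply fmeet_greatest. Qed.
Lemma mm (a b a' b' : L) : a ⊑ a' -> b ⊑ b' -> a ⊓ b ⊑ a' ⊓ b'.
Proof. intros; apply mg; [eapply lt; [apply ml|auto] | eapply lt; [apply mr|auto]]. Qed.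
Lemma mll (a b c : L) : a ⊑ c -> a ⊓ b ⊑ c. Proof. intros; eapply lt; [apply ml|auto]. Qed.
Lemma mrl (a b c : L) : b ⊑ c -> a ⊓ b ⊑ c. Proof. intros; eapply lt; [apply mr|auto]. Qed.
Lemma mC (a b : L) : a ⊓ b = b ⊓ a. Proof. apply las; apply mg; auto using ml, mr. Qed.
Lemma mA (a b c : L) : a ⊓ (b ⊓ c) = a ⊓ b ⊓ c.
Proof. apply las; repeat apply mg; eauto using ml, mr, mll, mrl. Qed.
Lemma top_ge (a : L) : a ⊑ top. Proof. apply finf_greatest; intros _ []. Qed.
Lemma mtl (a : L) : top ⊓ a = a. Proof. apply las; auto using mr. apply mg; auto using top_ge, lr. Qed.
Lemma mtr (a : L) : a ⊓ top = a. Proof. rewrite mC; apply mtl. Qed.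
Lemma mp (a b : L) : a ⊓ fimp a b ⊑ b. Proof. rewrite mC. apply fimp_adj, lr. Qed.
Lemma imp_i (a b c : L) : c ⊓ a ⊑ b -> c ⊑ fimp a b. Proof. apply fimp_adj. Qed.
Lemma imp_e (a b c : L) : c ⊑ fimp a b -> c ⊓ a ⊑ b. Proof. apply fimp_adj. Qed.

Lemma su {I} (f : I -> L) i : f i ⊑ isup f. Proof. apply fsup_ub; eauto. Qed.
Lemma si {I} (f : I -> L) a i : a ⊑ f i -> a ⊑ isup f. Proof. intros; eapply lt; eauto using su. Qed.
Lemma sl {I} (f : I -> L) b : (forall i, f i ⊑ b) -> isup f ⊑ b.
Proof. intros H; apply fsup_least; intros a [i ->]; auto. Qed.
Lemma sm {I} (f g : I -> L) : (forall i, f i ⊑ g i) -> isup f ⊑ isup g.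
Proof. intros; apply sl; intros; eapply si; eauto. Qed.
Lemma il {I} (f : I -> L) i : iinf f ⊑ f i. Proof. apply finf_lb; eauto. Qed.
Lemma ig {I} (f : I -> L) b : (forall i, b ⊑ f i) -> b ⊑ iinf f.
Proof. intros H; apply finf_greatest; intros a [i ->]; auto. Qed.

Lemma sel {I} (f : I -> L) c b : (forall i, f i ⊓ c ⊑ b) -> isup f ⊓ c ⊑ b.
Proof. intros H. apply imp_e. apply sl. intros i. apply imp_i. auto. Qed.
Lemma ser {I} (f : I -> L) c b : (forall i, c ⊓ f i ⊑ b) -> c ⊓ isup f ⊑ b.
Proof. intros H. rewrite mC. apply sel. intros i; rewrite mC; auto. Qed.

Lemma sub_mp {X} (A B : Lset L X) x : sub A B ⊓ A x ⊑ B x.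
Proof. eapply lt; [apply mm; [apply (il _ x)|apply lr]|]. rewrite mC; apply mp. Qed.
Lemma sub_i {X} (A B : Lset L X) c : (forall x, c ⊓ A x ⊑ B x) -> c ⊑ sub A B.
Proof. intros H; apply ig; intros x; apply imp_i; auto. Qed.

Lemma Lj_ub {X} (F : Lset L X -> Prop) B x : F B -> B x ⊑ Ljoin F x.
Proof. intros; apply fsup_ub; eauto. Qed.
Lemma Lj_l {X} (F : Lset L X -> Prop) x b : (forall B, F B -> B x ⊑ b) -> Ljoin F x ⊑ b.
Proof. intros H; apply fsup_least; intros a [B [HB ->]]; auto. Qed.
Lemma Lj_el {X} (F : Lset L X -> Prop) x c b : (forall B, F B -> B x ⊓ c ⊑ b) -> Ljoin F x ⊓ c ⊑ b.
Proof. intros H. apply imp_e. apply Lj_l. intros; apply imp_i; auto. Qed.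

Lemma top_le (a : L) : top ⊑ a -> a = top. Proof. intros; apply las; auto using top_ge. Qed.
End FrameLemmas.

Ltac atom := first [ apply lr | apply top_ge | apply mll; atom | apply mrl; atom ].
Ltac mauto := repeat apply mg; atom.

Section Dom.
Context {L : frame} {P : Type} (e : P -> P -> L) (Hord : Lorder e).
Local Notation "a ⊑ b" := (@fle L a b) (at level 70).
Local Notation "a ⊓ b" := (@fmeet L a b) (at level 40, left associativity).
Local Notation top := (ftop L).
Local Notation wb := (waybelow e).

Lemma e_refl x : e x x = top. Proof. apply Hord. Qed.
Lemma e_tr x y z : e x y ⊓ e y z ⊑ e x z. Proof. apply Hord. Qed.

Lemma down_ideal y : ideal e (down e y).
Proof.
  unfold down; split; [split|].
  - apply top_le. eapply si with (i := y). rewrite e_refl. apply lr.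
  - intros a b. eapply si with (i := y). rewrite e_refl, mtl. apply lr.
  - intros a b. rewrite mC. apply e_tr.
Qed.

Lemma down_sup y : is_Lsup e (down e y) y.
Proof.
  intros z. unfold down. apply las.
  - apply sub_i. intros x. rewrite mC. apply e_tr.
  - eapply lt; [|apply (sub_mp (fun x => e x y) (fun x => e x z) y)]. cbv beta. rewrite e_refl, mtr. apply lr.
Qed.

Lemma sup_le D s : is_Lsup e D s -> forall x, D x ⊑ e x s.
Proof.
  intros H x. pose proof (H s) as E. rewrite e_refl in E.
  eapply lt; [|apply (sub_mp D (down e s) x)]. rewrite <- E, mtl. apply lr.
Qed.

Lemma sup_uniq D s t : is_Lsup e D s -> is_Lsup e D t -> s = t.
Proof.
  intros Hs Ht. apply Hord.
  rewrite (Hs t), (Ht s), <- (Ht t), <- (Hs s), !e_refl. apply mtl.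
Qed.

Lemma wb_ideal I s x : ideal e I -> is_Lsup e I s -> wb s x ⊑ I x.
Proof.
  intros HI Hs. unfold waybelow.
  eapply lt; [apply finf_lb; exists I, s; split; [exact HI|split; [exact Hs|reflexivity]]|].
  rewrite e_refl. eapply lt; [|apply (mp top (I x))]. rewrite mtl. apply lr.
Qed.

Lemma wb_le y x : wb y x ⊑ e x y.
Proof. apply (wb_ideal (down e y)); [apply down_ideal|apply down_sup]. Qed.

Lemma wb_fimp z x I s : ideal e I -> is_Lsup e I s -> wb z x ⊓ e z s ⊑ I x.
Proof.
  intros HI Hs. apply imp_e. unfold waybelow. apply finf_lb. exists I, s. auto.
Qed.

Lemma wb_lower z x y : wb z y ⊓ e x y ⊑ wb z x.
Proof.
  unfold waybelow at 2. apply finf_greatest. intros a [I [s [HI [Hs ->]]]].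
  apply imp_i. eapply lt; [|apply (proj2 HI x y)].
  apply mg; [|mauto]. eapply lt; [|apply (wb_fimp z y I s HI Hs)]. mauto.
Qed.

Lemma wb_upper x y y' : wb y x ⊓ e y y' ⊑ wb y' x.
Proof.
  unfold waybelow at 2. apply finf_greatest. intros a [I [s [HI [Hs ->]]]].
  apply imp_i. eapply lt; [|apply (wb_fimp y x I s HI Hs)].
  apply mg; [mauto|]. eapply lt; [|apply (e_tr y y' s)]. mauto.
Qed.

Definition Icl (D : Lset L P) : Lset L P := fun w => isup (fun y => D y ⊓ e w y).

Lemma D_Icl D x : D x ⊑ Icl D x.
Proof. unfold Icl. eapply si with (i := x). rewrite e_refl, mtr. apply lr. Qed.

Lemma Icl_ideal D : directed e D -> ideal e (Icl D).
Proof.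
  intros [Hne Hd]. split; [split|].
  - apply top_le. unfold Lnonempty in Hne. rewrite <- Hne. apply sm. apply D_Icl.
  - intros a b. unfold Icl at 1. apply sel. intros y. unfold Icl at 1. apply ser. intros y'.
    eapply lt; [apply (mg (isup (fun z => D z ⊓ (e y z ⊓ e y' z))) (e a y ⊓ e b y'));
      [eapply lt; [|apply (Hd y y')]; mauto | mauto]|].
    apply sel. intros z. eapply si with (i := z).
    apply mg; [|apply mg].
    + eapply lt; [|apply D_Icl]. mauto.
    + eapply lt; [|apply (e_tr a y z)]. mauto.
    + eapply lt; [|apply (e_tr b y' z)]. mauto.
  - intros x y. unfold Icl. apply sel. intros y0. eapply si with (i := y0).
    apply mg; [mauto|]. eapply lt; [|apply (e_tr x y y0)]. mauto.
Qed.

Lemma Icl_sup D s : is_Lsup e D s -> is_Lsup e (Icl D) s.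
Proof.
  intros H t. rewrite (H t). apply las.
  - apply sub_i. intros x. unfold Icl. apply ser. intros y.
    eapply lt; [|apply (e_tr x y t)]. apply mg; [mauto|].
    eapply lt; [|apply (sub_mp D (down e t) y)]. mauto.
  - apply sub_i. intros x. eapply lt; [|apply (sub_mp (Icl D) (down e t) x)].
    apply mg; [mauto|]. eapply lt; [|apply D_Icl]. mauto.
Qed.

Section Cont.
Hypothesis Hcont : Lcontinuous e.

Definition J s x := isup (fun z => wb s z ⊓ wb z x).

Lemma J_ideal s : ideal e (J s).
Proof.
  split; [split|].
  - apply top_le. rewrite <- (proj1 (proj1 (Hcont s))). apply sl. intros z.
    rewrite <- (mtr (wb s z)). rewrite <- (proj1 (proj1 (Hcont z))).
    apply ser. intros x. eapply si with (i := x). unfold J. eapply si with (i := z). apply lr.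
  - intros a b. unfold J at 1. apply sel. intros z. unfold J at 1. apply ser. intros z'.
    eapply lt; [apply (mg (isup (fun w => wb s w ⊓ (e z w ⊓ e z' w))) (wb z a ⊓ wb z' b));
      [eapply lt; [|apply (proj2 (proj1 (Hcont s)) z z')]; mauto | mauto]|].
    apply sel. intros w.
    eapply lt; [apply (mg (wb s w) (wb w a ⊓ wb w b)); [mauto|apply mg]|].
    { eapply lt; [|apply (wb_upper a z w)]. mauto. }
    { eapply lt; [|apply (wb_upper b z' w)]. mauto. }
    eapply lt; [apply mm; [apply lr|apply (proj2 (proj1 (Hcont w)) a b)]|].
    apply ser. intros v. eapply si with (i := v). apply mg; [|mauto].
    unfold J. eapply si with (i := w). mauto.
  - intros x y. unfold J. apply sel. intros z. eapply si with (i := z).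
    apply mg; [mauto|]. eapply lt; [|apply (wb_lower z x y)]. mauto.
Qed.

Lemma J_sup s : is_Lsup e (J s) s.
Proof.
  intros t. rewrite (proj2 (Hcont s) t). apply las.
  - apply sub_i. intros x. unfold J. apply ser. intros z.
    eapply lt; [|apply (e_tr x z t)]. apply mg.
    + eapply lt; [|apply (wb_le z x)]. mauto.
    + eapply lt; [|apply (sub_mp (wb s) (down e t) z)]. mauto.
  - apply sub_i. intros z. pose proof (proj2 (Hcont z) t) as E. unfold down at 2. rewrite E.
    apply sub_i. intros x. eapply lt; [|apply (sub_mp (J s) (down e t) x)].
    apply mg; [mauto|]. unfold J. eapply si with (i := z). mauto.
Qed.

Lemma interp s x : wb s x ⊑ J s x.
Proof. apply wb_ideal; [apply J_ideal|apply J_sup]. Qed.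

Lemma wb_open x : sigmaL e (fun y => wb y x).
Proof.
  split.
  - intros y y'. apply wb_upper.
  - intros D s Hd Hs. apply las.
    + eapply lt; [apply interp|]. unfold J. apply sl. intros z.
      eapply lt; [apply mm; [apply (wb_ideal (Icl D) s z (Icl_ideal D Hd) (Icl_sup D s Hs))|apply lr]|].
      unfold Icl. apply sel. intros y. eapply si with (i := y).
      apply mg; [|mauto]. eapply lt; [|apply (wb_upper x z y)]. mauto.
    + apply sl. intros y. eapply lt; [|apply (wb_upper x y s)].
      apply mg; [mauto|]. eapply lt; [|apply (sup_le D s Hs y)]. mauto.
Qed.

Lemma open_expand A : sigmaL e A -> forall y, A y = isup (fun x => A x ⊓ wb y x).
Proof. intros HA y. apply (proj2 HA); apply Hcont. Qed.

End Cont.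

Lemma open_le A x y : upper_set e A -> A x ⊓ wb y x ⊑ A y.
Proof.
  intros HA. eapply lt; [|apply (HA x y)]. apply mg; [mauto|].
  eapply lt; [|apply (wb_le y x)]. mauto.
Qed.

End Dom.

Section Main.
Context {L : frame} {P : Type} (e : P -> P -> L) (Hord : Lorder e).
Local Notation "a ⊑ b" := (@fle L a b) (at level 70).
Local Notation "a ⊓ b" := (@fmeet L a b) (at level 40, left associativity).
Local Notation top := (ftop L).
Local Notation wb := (waybelow e).
Local Notation O := (sigmaL e).

Lemma O_meet A B : O A -> O B -> O (fun x => A x ⊓ B x).
Proof.
  intros HA HB. split.
  - intros x y. apply mg.
    + eapply lt; [|apply (proj1 HA x y)]. mauto.
    + eapply lt; [|apply (proj1 HB x y)]. mauto.
  - intros D s Hd Hs. apply las.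
    + rewrite (proj2 HA D s Hd Hs), (proj2 HB D s Hd Hs).
      apply sel. intros x. apply ser. intros y.
      eapply lt; [apply (mg (isup (fun z => D z ⊓ (e x z ⊓ e y z))) (A x ⊓ B y));
        [eapply lt; [|apply (proj2 Hd x y)]; mauto | mauto]|].
      apply sel. intros z. eapply si with (i := z). apply mg; [apply mg|mauto].
      * eapply lt; [|apply (proj1 HA x z)]. mauto.
      * eapply lt; [|apply (proj1 HB y z)]. mauto.
    + apply sl. intros x. pose proof (sup_le e Hord D s Hs x). apply mg.
      * eapply lt; [|apply (proj1 HA x s)]. apply mg; [mauto|]. eapply lt; [|eassumption]. mauto.
      * eapply lt; [|apply (proj1 HB x s)]. apply mg; [mauto|]. eapply lt; [|eassumption]. mauto.
Qed.

Lemma O_join F : (forall B, F B -> O B) -> O (Ljoin F).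
Proof.
  intros HF. split.
  - intros x y. apply Lj_el. intros B HB. eapply lt; [|apply (Lj_ub F B y HB)].
    apply (proj1 (HF B HB)).
  - intros D s Hd Hs. apply las.
    + apply Lj_l. intros B HB. rewrite (proj2 (HF B HB) D s Hd Hs).
      apply sm. intros x. apply mm; [apply Lj_ub; auto|apply lr].
    + apply sl. intros x. apply Lj_el. intros B HB.
      eapply lt; [|apply (Lj_ub F B s HB)].
      eapply lt; [|apply (proj1 (HF B HB) x s)]. apply mg; [mauto|].
      eapply lt; [|apply (sup_le e Hord D s Hs x)]. mauto.
Qed.

Lemma O_const (l : L) : O (Lconst l).
Proof.
  split.
  - intros x y. unfold Lconst. apply ml.
  - intros D s Hd Hs. unfold Lconst. apply las.
    + eapply lt; [apply (mg l top l); [apply lr|apply top_ge]|].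
      rewrite <- (proj1 Hd). apply ser. intros x. eapply si with (i := x). apply lr.
    + apply sl. intros x. apply ml.
Qed.

Lemma topo : is_Ltopology O.
Proof. split; [|split]; [apply O_meet|apply O_join|apply O_const]. Qed.

Definition upc x : Lset L P := fun y => e x y.

Lemma upc_sub x V : upper_set e V -> sub (upc x) V = V x.
Proof.
  intros HV. apply las.
  - eapply lt; [|apply (sub_mp (upc x) V x)]. apply mg; [apply lr|].
    unfold upc. rewrite (e_refl e Hord). apply top_ge.
  - apply sub_i. intros y. apply HV.
Qed.

Lemma upc_sc x : super_compact O (upc x).
Proof.
  split.
  - apply top_le. eapply si with (i := x). unfold upc. rewrite (e_refl e Hord). apply lr.
  - intros I V HV. rewrite upc_sub.
    + f_equal. apply functional_extensionality. intros i. rewrite upc_sub; auto. apply HV.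
    + intros y y'. apply sel. intros i. eapply si with (i := i). apply (proj1 (HV i)).
Qed.

Section C.
Hypothesis Hcont : Lcontinuous e.

Lemma int_upc x y : wb y x ⊑ interior O (upc x) y.
Proof.
  unfold interior. apply (Lj_ub _ (fun y => wb y x)). split.
  - apply (wb_open e Hord Hcont).
  - intros z. apply wb_le; auto.
Qed.

Lemma lsc : locally_super_compact O.
Proof.
  intros A HA. apply functional_extensionality. intros y. apply las.
  - rewrite (open_expand e Hcont A HA y). apply sl. intros x.
    eapply lt; [|apply fsup_ub; exists (upc x); split; [apply upc_sc|reflexivity]].
    rewrite upc_sub by apply HA. apply mm; [apply lr|apply int_upc].
  - apply fsup_least. intros a [B [HB ->]].
    eapply lt; [|apply (sub_mp B A y)]. apply mm; [apply lr|].
    unfold interior. apply Lj_l. intros B' [_ H]. apply H.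
Qed.

Lemma p_mono p A B : is_point O p -> O A -> O B -> Lsubset A B -> p A ⊑ p B.
Proof.
  intros Hp HA HB Hsub.
  assert (E : (fun x => A x ⊓ B x) = A).
  { apply functional_extensionality. intros x. apply las; [apply ml|apply mg; [apply lr|apply Hsub]]. }
  rewrite <- E, (proj1 Hp A B HA HB). apply mr.
Qed.

Lemma p_const p (c : L) U : is_point O p -> O U -> p (fun y => c ⊓ U y) = c ⊓ p U.
Proof.
  intros Hp HU. transitivity (p (Lconst c) ⊓ p U).
  - exact (proj1 Hp (Lconst c) U (O_const c) HU).
  - rewrite (proj2 (proj2 Hp) c). reflexivity.
Qed.

Lemma O_cw c x : O (fun y => c ⊓ wb y x).
Proof. apply (O_meet (Lconst c)); [apply O_const|apply wb_open; auto]. Qed.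

Lemma sober : Ldcpo e -> Lsober O.
Proof.
  intros Hdcpo. split.
  - intros x y H.
    assert (E : wb x = wb y).
    { apply functional_extensionality. intros z. apply (H (fun w => wb w z)). apply wb_open; auto. }
    apply (sup_uniq e Hord (wb x)); [apply Hcont|rewrite E; apply Hcont].
  - intros p Hp.
    set (D := fun x => p (fun y => wb y x)).
    assert (Hd : directed e D).
    { split.
      - set (F0 := fun B : Lset L P => exists x, B = (fun y => wb y x)).
        assert (E : Ljoin F0 = Lconst top).
        { apply functional_extensionality. intros y. apply las; [apply top_ge|].
          unfold Lconst. rewrite <- (proj1 (proj1 (Hcont y))). apply sl. intros x.
          apply (Lj_ub F0 (fun y => wb y x)). exists x; reflexivity. }
        pose proof (proj1 (proj2 Hp) F0) as E2.
        rewrite E, (proj2 (proj2 Hp)) in E2.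
        apply top_le. rewrite E2; [|intros B [x ->]; apply wb_open; auto].
        apply fsup_least. intros a [B [[x ->] ->]]. apply (su D x).
      - intros a b. unfold D at 1 2.
        rewrite <- (proj1 Hp); [|apply wb_open; auto|apply wb_open; auto].
        set (F1 := fun B : Lset L P => exists z, B = (fun y => (e a z ⊓ e b z) ⊓ wb y z)).
        assert (HF1 : forall B, F1 B -> O B). { intros B [z ->]. apply O_cw. }
        eapply lt; [apply (p_mono p _ (Ljoin F1) Hp)|].
        + apply O_meet; apply wb_open; auto.
        + apply O_join; auto.
        + intros y. eapply lt; [apply (proj2 (proj1 (Hcont y)) a b)|]. apply sl. intros z.
          eapply lt; [|apply (Lj_ub F1 (fun y => e a z ⊓ e b z ⊓ wb y z) y); exists z; reflexivity]. cbv beta. mauto.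
        + rewrite (proj1 (proj2 Hp) F1 HF1). apply fsup_least. intros c [B [[z ->] ->]].
          eapply si with (i := z). rewrite p_const; auto; [|apply wb_open; auto].
          unfold D. mauto. }
    destruct (Hdcpo D Hd) as [x0 Hx0]. exists x0. intros A HA.
    unfold pt_of. rewrite (proj2 HA D x0 Hd Hx0).
    set (F2 := fun B : Lset L P => exists x, B = (fun y => A x ⊓ wb y x)).
    assert (HF2 : forall B, F2 B -> O B). { intros B [z ->]. apply O_cw. }
    assert (E : A = Ljoin F2).
    { apply functional_extensionality. intros y. apply las.
      - rewrite (open_expand e Hcont A HA y). apply sl. intros x.
        apply (Lj_ub F2 (fun y => A x ⊓ wb y x)). exists x; reflexivity.
      - apply Lj_l. intros B [x ->]. apply open_le; auto. apply HA. }
    rewrite E at 1. rewrite (proj1 (proj2 Hp) F2 HF2). apply las.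
    + apply fsup_least. intros c [B [[z ->] ->]]. eapply si with (i := z).
      rewrite p_const; auto; [apply lr|apply wb_open; auto].
    + apply sl. intros z. apply fsup_ub. exists (fun y => A z ⊓ wb y z). split.
      * exists z; reflexivity.
      * rewrite p_const; auto. apply wb_open; auto.
Qed.
End C.
End Main.

Theorem proposition4p2 (L : frame) (P : Type) (e : P -> P -> L) :
  Lorder e -> Lcontinuous e ->
  (is_Ltopology (sigmaL e) /\ locally_super_compact (sigmaL e)) /\
  (Ldcpo e -> Lsober (sigmaL e)).
Proof.
  intros Hord Hcont. split; [split|].
  - apply topo; auto.
  - apply lsc; auto.
  - apply sober; auto.
Qed.
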